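(* Let $\omega\in[n]^*$, $j\in[n]$, and $\sigma\in\mathrm{Sym}_n$ with $\sigma(j)=n$. Then \[B_\omega=\mathrm{Comp}_0\big(L^\circ(a^j_\omega;M_\omega,\sigma)\setminus L^\circ(0;M_\omega,\sigma)\big)\] and \[B_{\omega*j}=\mathrm{Comp}_0\big(L(a^j_\omega;M_\omega,\sigma)\setminus L^\circ(0;M_\omega,\sigma)\big).\]
   Context: Let $[n]=\{1,\dots,n\}$, $e_1,\dots,e_n$ the standard basis of $\mathbb{Z}^n$; $\varepsilon$ is the empty word, $*$ concatenation. For words $\omega$ over $[n]$ define recursively $a^i_\omega,\delta^i_\omega\in\mathbb{Z}^n$: $a^i_\varepsilon=\delta^i_\varepsilon=e_i$; $a^i_{\omega*j}=a^i_\omega$ if $i\ne j$, $a^j_{\omega*j}=a^j_\omega+\delta^j_\omega$; $\delta^j_{\omega*j}=\delta^j_\omega$, $\delta^i_{\omega*j}=\delta^i_\omega-\delta^j_\omega$ for $i\ne j$. Let $B_\varepsilon=\{0\}$, $B_{\omega*j}=B_\omega+\{0,\delta^j_\omega\}$ (Minkowski sum). Let $M_\omega=(\delta^1_\omega\ \cdots\ \delta^n_\omega)^{-1}$ (inverse of the matrix with columns $\delta^i_\omega$). $\mathrm{Sym}_n$ acts on $\mathbb{Z}^n$ by $\sigma\cdot x=(x_{\sigma^{-1}(i)})_{i\in[n]}$. Let $\le_{\mathrm{lex}}$ be the lexicographic order on $\mathbb{Z}^n$ (comparing first coordinates first), and write $x\le_{\sigma}y$ iff $\sigma x\le_{\mathrm{lex}}\sigma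 y$, and $x<_\sigma y$ iff $\sigma x<_{\mathrm{lex}}\sigma y$. For $P\in\mathbb{Z}^n$, $M\in\mathbb{Z}^{n\times n}_{\ge0}$ with $\det M=1$ and $\sigma\in\mathrm{Sym}_n$, let $L(P;M,\sigma)=\{x\in\mathbb{Z}^n: Mx\le_\sigma MP\}$ and $L^\circ(P;M,\sigma)=\{x\in\mathbb{Z}^n: Mx<_\sigma MP\}$. A subset of $\mathbb{Z}^n$ is regarded as a graph by joining two elements iff their Euclidean distance is $1$; $\mathrm{Comp}_0(X)$ is the connected component of $X$ containing $0$. *)

(* Defs.v *)
(* Vectors of Z^n are column vectors 'cV[int]_n, indices [n] are 'I_n
   (index i : 'I_n stands for i+1), words are seq 'I_n, Sym_n is 'S_n. *)
From mathcomp Require Import all_boot all_order all_algebra all_fingroup.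
Set Implicit Arguments. Unset Strict Implicit. Unset Printing Implicit Defensive.
Import Order.TTheory GRing.Theory Num.Theory.
Local Open Scope ring_scope.

Section Defs.
Variable n : nat.
Notation vec := 'cV[int]_n.

Definition ebasis (i : 'I_n) : vec := delta_mx i 0.

(* state (a^i_w, delta^i_w, B_w) *)
Definition state := (('I_n -> vec) * ('I_n -> vec) * (vec -> Prop))%type.

Definition state0 : state := (ebasis, ebasis, fun x => x = 0).

Definition step (s : state) (j : 'I_n) : state :=
  let: (a, d, B) := s in
  (fun i => if i == j then a j + d j else a i,
   fun i => if i == j then d j else d i - d j,
   fun x => exists b, B b /\ (x = b \/ x = b + d j)).

Definition wstate (w : seq 'I_n) : state := foldl step state0 w.

Definition avec (w : seq 'I_n) (i : 'I_n) : vec := (wstate w).1.1 i.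
Definition dvec (w : seq 'I_n) (i : 'I_n) : vec := (wstate w).1.2 i.
Definition Bset (w : seq 'I_n) : vec -> Prop := (wstate w).2.

Definition Mmat (w : seq 'I_n) : 'M[int]_n :=
  invmx (\matrix_(r < n, c < n) dvec w c r 0).

Definition pact (s : 'S_n) (x : vec) : vec := \col_i x ((s^-1)%g i) 0.

Definition lex_lt (x y : vec) : Prop :=
  exists i : 'I_n, x i 0 < y i 0 /\ forall k : 'I_n, (k < i)%N -> x k 0 = y k 0.
Definition lex_le (x y : vec) : Prop := x = y \/ lex_lt x y.

Definition Lset (P : vec) (M : 'M[int]_n) (s : 'S_n) : vec -> Prop :=
  fun x => lex_le (pact s (M *m x)) (pact s (M *m P)).
Definition Loset (P : vec) (M : 'M[int]_n) (s : 'S_n) : vec -> Prop :=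
  fun x => lex_lt (pact s (M *m x)) (pact s (M *m P)).

Definition setminus (X Y : vec -> Prop) : vec -> Prop := fun x => X x /\ ~ Y x.

Definition adj : rel vec := fun x y => (\sum_i (x i 0 - y i 0) ^+ 2) == 1.

(* connected component of 0 in X (empty if 0 is not in X) *)
Definition Comp0 (X : vec -> Prop) : vec -> Prop :=
  fun y => exists p : seq vec,
    [/\ X 0, forall z, z \in p -> X z, path adj 0 p & last 0 p = y].

End Defs.

(* Main.v *)
Require Import Defs.
From mathcomp Require Import all_boot all_order all_algebra all_fingroup.
From Stdlib Require Import Classical FunctionalExtensionality PropExtensionality.
From mathcomp Require Import zify ring lra.
Set Implicit Arguments. Unset Strict Implicit. Unset Printing Implicit Defensive.
Import Order.TTheory GRing.Theory Num.Theory.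
Local Open Scope ring_scope.


Lemma ebasisE n (l i : 'I_n) : ebasis l i 0 = (i == l)%:R.
Proof. by rewrite /ebasis mxE andbT. Qed.

Definition Nm n (k : 'I_n) : 'M[int]_n := \matrix_(r, c) ((r == k) && (c != k))%:R.
Definition Fm n (k : 'I_n) : 'M[int]_n := 1%:M - Nm k.
Definition Fi n (k : 'I_n) : 'M[int]_n := 1%:M + Nm k.

Lemma Nm_e n (k l : 'I_n) : Nm k *m ebasis l = if l == k then 0 else ebasis k.
Proof.
rewrite /ebasis -colE; apply/matrixP => r c.
case: (l =P k) => [->|/eqP lk]; first by rewrite !mxE eqxx andbF.
by rewrite !mxE lk andbT (ord1 c) eqxx andbT.
Qed.

Lemma Nm_sq n (k : 'I_n) : Nm k *m Nm k = 0.
Proof.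
apply/matrixP => r c; rewrite !mxE; apply: big1 => i _; rewrite !mxE.
by case: (i == k); rewrite ?andbF ?andbT /= ?mul0r ?mulr0.
Qed.

Lemma FFi n (k : 'I_n) : Fm k *m Fi k = 1%:M.
Proof.
by rewrite /Fm /Fi mulmxBl !mulmxDr !mul1mx mulmx1 Nm_sq addr0 addrK.
Qed.

Lemma FiF n (k : 'I_n) : Fi k *m Fm k = 1%:M.
Proof. exact: mulmx1C (FFi k). Qed.

Lemma F_inj n (k : 'I_n) (x y : 'cV[int]_n) : Fm k *m x = Fm k *m y -> x = y.
Proof. by move=> h; rewrite -(mul1mx x) -(mul1mx y) -(FiF k) -!mulmxA h. Qed.

Lemma F_ek n (k : 'I_n) : Fm k *m ebasis k = ebasis k.
Proof. by rewrite /Fm mulmxBl mul1mx Nm_e eqxx subr0. Qed.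

Lemma F_el n (k l : 'I_n) : l != k -> Fm k *m ebasis l = ebasis l - ebasis k.
Proof. by move=> h; rewrite /Fm mulmxBl mul1mx Nm_e (negbTE h). Qed.

Lemma F_unit n (k : 'I_n) : Fm k \in unitmx.
Proof. by case: (mulmx1_unit (FFi k)). Qed.

Definition Gk n (k : 'I_n) (s : state n) : state n :=
  let: (a, d, B) := s in
  (fun i => Fm k *m a i + ebasis k,
   fun i => Fm k *m d i,
   fun x => exists b, B b /\ (x = Fm k *m b \/ x = Fm k *m b + ebasis k)).

Lemma step_G n (k : 'I_n) s j : step (Gk k s) j = Gk k (step s j).
Proof.
case: s => [[a d] B] /=; congr (_, _, _).
- apply: functional_extensionality => i; case: (i == j) => //.
  by rewrite mulmxDr addrAC.
- apply: functional_extensionality => i; case: (i == j) => //.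
  by rewrite mulmxBr.
- apply: functional_extensionality => x; apply: propositional_extensionality.
  split.
  + move=> [b [[b0 [Hb0 Hb]] Hx]].
    case: Hb => ?; case: Hx => ?; subst.
    * by exists b0; split; [exists b0; split; [|left]|left].
    * by exists (b0 + d j); split; [exists b0; split; [|right]|left; rewrite mulmxDr].
    * by exists b0; split; [exists b0; split; [|left]|right].
    * exists (b0 + d j); split; [exists b0; split; [|right]|right] => //.
      by rewrite mulmxDr addrAC.
  + move=> [b [[b0 [Hb0 Hb]] Hx]].
    case: Hb => ?; case: Hx => ?; subst.
    * by exists (Fm k *m b0); split; [exists b0; split; [|left]|left].
    * by exists (Fm k *m b0 + ebasis k); split; [exists b0; split; [|right]|left].
    * by exists (Fm k *m b0); split; [exists b0; split; [|left]|right; rewrite mulmxDr].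
    * exists (Fm k *m b0 + ebasis k); split; [exists b0; split; [|right]|right] => //.
      by rewrite mulmxDr addrAC.
Qed.

Lemma step0_G n (k : 'I_n) : step (state0 n) k = Gk k (state0 n).
Proof.
rewrite /state0 /=; congr (_, _, _).
- apply: functional_extensionality => i; case: (eqVneq i k) => [->|ik].
  by rewrite F_ek.
  by rewrite F_el // subrK.
- apply: functional_extensionality => i; case: (eqVneq i k) => [->|ik].
  by rewrite F_ek.
  by rewrite F_el.
- apply: functional_extensionality => x; apply: propositional_extensionality.
  split; move=> [b [Hb Hx]]; exists b; split => //; rewrite Hb mulmx0 in Hx *;
  by rewrite ?add0r; case: Hx => ->; rewrite ?add0r; [left|right].
Qed.

Lemma foldl_G n (k : 'I_n) w s : foldl (@step n) (Gk k s) w = Gk k (foldl (@step n) s w).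
Proof. by elim: w s => [|j w IH] s //=; rewrite step_G IH. Qed.

Lemma wstate_cons n (k : 'I_n) w : wstate (k :: w) = Gk k (wstate w).
Proof. rewrite /wstate; change (foldl (@step n) (step (state0 n) k) w = Gk k (foldl (@step n) (state0 n) w)); by rewrite step0_G foldl_G. Qed.

Lemma avec_cons n (k : 'I_n) w i : avec (k :: w) i = Fm k *m avec w i + ebasis k.
Proof. by rewrite /avec wstate_cons; case: (wstate w) => [[a d] B]. Qed.
Lemma dvec_cons n (k : 'I_n) w i : dvec (k :: w) i = Fm k *m dvec w i.
Proof. by rewrite /dvec wstate_cons; case: (wstate w) => [[a d] B]. Qed.
Lemma Bset_cons n (k : 'I_n) w x : Bset (k :: w) x <->
  exists b, Bset w b /\ (x = Fm k *m b \/ x = Fm k *m b + ebasis k).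
Proof. by rewrite /Bset wstate_cons; case: (wstate w) => [[a d] B]. Qed.
Lemma avec_nil n (i : 'I_n) : avec [::] i = ebasis i. Proof. by []. Qed.
Lemma dvec_nil n (i : 'I_n) : dvec [::] i = ebasis i. Proof. by []. Qed.
Lemma Bset_nil n (x : 'cV[int]_n) : Bset [::] x <-> x = 0. Proof. by []. Qed.
Lemma Bset_rcons n w (j : 'I_n) x : Bset (rcons w j) x <->
  exists b, Bset w b /\ (x = b \/ x = b + dvec w j).
Proof. by rewrite /Bset /dvec /wstate foldl_rcons; case: (foldl _ _ w) => [[a d] B]. Qed.

Definition Dmat n (w : seq 'I_n) : 'M[int]_n := \matrix_(r < n, c < n) dvec w c r 0.

Lemma Dmat_col n (w : seq 'I_n) i : Dmat w *m ebasis i = dvec w i.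
Proof. by rewrite /ebasis -colE; apply/matrixP => r c; rewrite !mxE (ord1 c). Qed.

Lemma Dmat_cons n (k : 'I_n) w : Dmat (k :: w) = Fm k *m Dmat w.
Proof.
apply/matrixP => r c; rewrite /Dmat !mxE dvec_cons mxE.
by apply: eq_bigr => i _; rewrite !mxE.
Qed.

Lemma Dmat_unit n (w : seq 'I_n) : Dmat w \in unitmx.
Proof.
elim: w => [|k w IH].
  suff -> : Dmat ([::] : seq 'I_n) = 1%:M by exact: unitmx1.
  by apply/matrixP => r c; rewrite !mxE /dvec /= eqxx andbT.
by rewrite Dmat_cons unitmx_mul F_unit.
Qed.

Lemma M_d n (w : seq 'I_n) i : Mmat w *m dvec w i = ebasis i.
Proof.
rewrite -Dmat_col mulmxA.
have -> : Mmat w = invmx (Dmat w) by [].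
by rewrite mulVmx ?Dmat_unit // mul1mx.
Qed.

Lemma M_inj n (w : seq 'I_n) (x y : 'cV[int]_n) : Mmat w *m x = Mmat w *m y -> x = y.
Proof.
move=> h; rewrite -(mul1mx x) -(mul1mx y) -(mulmxV (Dmat_unit w)) -!mulmxA.
by congr (_ *m _); exact: h.
Qed.


Lemma adj_sym n (x y : 'cV[int]_n) : adj x y = adj y x.
Proof.
by rewrite /adj; congr (_ == _); apply: eq_bigr => i _; rewrite -opprB sqrrN.
Qed.

Lemma adj_plus n (x : 'cV[int]_n) l : adj x (x + ebasis l).
Proof.
rewrite /adj (bigD1 l) //= big1 ?addr0.
  by rewrite !mxE !eqxx /= opprD addrA subrr sub0r sqrrN expr1n.
move=> i il; rewrite !mxE (negbTE il) /= addr0 subrr.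
by rewrite expr0n.
Qed.

Lemma adj_minus n (x : 'cV[int]_n) l : adj x (x - ebasis l).
Proof. by rewrite adj_sym -{2}(subrK (ebasis l) x) adj_plus. Qed.

Lemma adj_inv n (x y : 'cV[int]_n) : adj x y ->
  exists l, y = x + ebasis l \/ y = x - ebasis l.
Proof.
rewrite /adj => /eqP H.
set d := fun i : 'I_n => x i 0 - y i 0.
have ge0 : forall i, 0 <= d i ^+ 2 by move=> i; exact: sqr_ge0.
have [l dl] : exists l, d l != 0.
  apply: NNPP => nex.
  have : \sum_i d i ^+ 2 = 0.
    apply: big1 => i _.
    have : d i = 0 by apply/eqP; apply: negbNE; apply/negP => h; apply: nex; exists i.
    by move=> ->; rewrite expr0n.
  by rewrite /d H.
rewrite (bigD1 l) //= in H.
have S0 : 0 <= \sum_(i | i != l) d i ^+ 2 by apply: sumr_ge0 => i _.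
have [E1 E2] : d l ^+ 2 = 1 /\ \sum_(i | i != l) d i ^+ 2 = 0.
  move: H S0 dl; rewrite expr2; set S := \sum_(i | _) _; set a := d l.
  move=> H S0 /eqP dl.
  have : 1 <= a * a by (have [h|h] : 0 < a \/ a < 0 by lia); nia.
  move=> ?; have H' : a * a + S = 1 by exact: H.
  rewrite -/a -/S; split; lia.
have Ez : forall i, i != l -> d i = 0.
  move=> i il; apply/eqP; rewrite -sqrf_eq0; apply/eqP.
  by apply: (psumr_eq0P _ E2) => // k _.
move/eqP: E1; rewrite sqrf_eq1 => /orP [] /eqP E1; exists l; [right|left];
  apply/matrixP => i c; rewrite (ord1 c) !mxE.
- case: (eqVneq i l) => [->|il]; first by move: E1; rewrite /d eqxx /=; lia.
  by move: (Ez i il); rewrite /= subr0 /d; lia.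
- case: (eqVneq i l) => [->|il]; first by move: E1; rewrite /d eqxx /=; lia.
  by move: (Ez i il); rewrite /= addr0 /d; lia.
Qed.


Lemma pactE n (s : 'S_n) x i : pact s x i 0 = x ((s^-1)%g i) 0.
Proof. by rewrite mxE. Qed.

Lemma pact_inj n (s : 'S_n) x y : pact s x = pact s y -> x = y.
Proof.
move=> h; apply/matrixP => i c; rewrite (ord1 c).
by have := congr1 (fun m : 'cV[int]_n => m (s i) 0) h; rewrite /= !pactE permK.
Qed.

Lemma lex_of n (s : 'S_n) (x y : 'cV[int]_n) (i0 : 'I_n) :
  x i0 0 < y i0 0 -> (forall i, (s i < s i0)%N -> x i 0 = y i 0) ->
  lex_lt (pact s x) (pact s y).
Proof.
move=> h1 h2; exists (s i0); rewrite !pactE permK; split => // k hk.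
by rewrite !pactE; apply: h2; rewrite permKV.
Qed.

Lemma lex_inv n (s : 'S_n) (x y : 'cV[int]_n) : lex_lt (pact s x) (pact s y) ->
  exists i0, x i0 0 < y i0 0 /\ forall i, (s i < s i0)%N -> x i 0 = y i 0.
Proof.
move=> [p [h1 h2]]; exists ((s^-1)%g p); rewrite !pactE in h1; split => // i.
rewrite permKV => hi; have := h2 _ hi; by rewrite !pactE permK.
Qed.

Lemma L0 n (s : 'S_n) (x y : 'cV[int]_n) :
  (forall i, x i 0 <= y i 0) -> ~ lex_lt (pact s y) (pact s x).
Proof.
move=> h /lex_inv [i0 [h1 _]]; have := h i0; lia.
Qed.

Lemma L1 n (s : 'S_n) (x y : 'cV[int]_n) :
  (forall i, x i 0 <= y i 0) -> (exists i, x i 0 < y i 0) ->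
  lex_lt (pact s x) (pact s y).
Proof.
move=> h [i1 h1].
have P1 : x i1 0 != y i1 0 by lia.
case: (@arg_minnP _ i1 (fun i => x i 0 != y i 0) (fun i => nat_of_ord (s i)) P1) => i0 P0 Hmin.
apply: (lex_of (i0 := i0)).
  by have := h i0; move: P0 => /eqP; lia.
move=> i hi; apply/eqP; apply: negbNE; apply/negP => hne.
by have := Hmin i hne; rewrite leqNgt hi.
Qed.

Lemma s_lt n (s : 'S_n) (j i : 'I_n) : (s j : nat) = n.-1 -> i != j -> (s i < n.-1)%N.
Proof.
move=> hj ij; have h1 := ltn_ord (s i).
have h2 : (s i : nat) != s j.
  apply/negP => /eqP /val_inj /perm_inj /eqP; exact/negP.
move: h2; rewrite hj; lia.
Qed.

Lemma L2 n (s : 'S_n) (j : 'I_n) (u w0 : 'cV[int]_n) : (s j : nat) = n.-1 ->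
  (forall i, w0 i 0 <= u i 0) -> (exists i, w0 i 0 < u i 0) ->
  ~ lex_lt (pact s u) (pact s (w0 + ebasis j)).
Proof.
move=> hj h [i1 h1] /lex_inv [i0 [H1 H2]].
move: H1; rewrite !mxE.
case: (eqVneq i0 j) => [e|ne] /=; last by have := h i0; lia.
subst i0.
have E : forall i, i != j -> u i 0 = w0 i 0.
  move=> i ij; have := H2 i; rewrite !mxE (negbTE ij) /= addr0; apply.
  by rewrite hj; apply: s_lt hj ij.
move=> hu.
case: (eqVneq i1 j) => [e|ne].
  subst i1; lia.
by have := E i1 ne; lia.
Qed.

Lemma L4 n (s : 'S_n) (j : 'I_n) (v : 'cV[int]_n) : (s j : nat) = n.-1 ->
  (forall i, v i 0 <= 0) -> (exists i, v i 0 < 0) -> v + ebasis j != 0 ->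
  lex_lt (pact s (v + ebasis j)) (pact s 0).
Proof.
move=> hj h [i1 h1] hne.
case: (boolP [exists i, (i != j) && (v i 0 != 0)]).
  move/existsP => [i2 P2].
  case: (@arg_minnP _ i2 (fun i => (i != j) && (v i 0 != 0)) (fun i => nat_of_ord (s i)) P2) => i0 /andP [P0 P0'] Hmin.
  apply: (lex_of (i0 := i0)).
    by rewrite !mxE (negbTE P0) /= addr0; have := h i0; move: P0' => /eqP; lia.
  move=> i hi.
  have ij : i != j.
    apply/eqP => e; subst i.
    have := s_lt hj P0; rewrite hj in hi; lia.
  rewrite !mxE (negbTE ij) /= addr0; apply/eqP; apply: negbNE; apply/negP => hv.
  by have := Hmin i (introT andP (conj ij hv)); rewrite leqNgt hi.
move/existsPn => Hz.
have Ez : forall i, i != j -> v i 0 = 0.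
  by move=> i ij; have := Hz i; rewrite ij /= => /negbNE /eqP.
have vj : v j 0 != -1.
  apply/negP => /eqP e; move/negP: hne; apply; apply/eqP/matrixP => i c.
  rewrite (ord1 c) !mxE; case: (eqVneq i j) => [->|ij] /=; first by rewrite e.
  by rewrite Ez // addr0.
apply: (lex_of (i0 := j)).
  rewrite !mxE eqxx /=.
  have i1j : i1 = j by apply/eqP; apply: negbNE; apply/negP => ne; have := Ez i1 ne; lia.
  subst i1; move: vj => /eqP; lia.
move=> i hi; have ij : i != j by apply/eqP => e; subst i; lia.
by rewrite !mxE (negbTE ij) /= addr0 Ez.
Qed.


Lemma ebE n (l i : 'I_n) : ebasis l i 0 = if i == l then 1 else 0.
Proof. by rewrite ebasisE; case: (i == l). Qed.

Lemma addE m n (x y : 'M[int]_(m, n)) i j : (x + y) i j = x i j + y i j.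
Proof. by rewrite mxE. Qed.
Lemma subE m n (x y : 'M[int]_(m, n)) i j : (x - y) i j = x i j - y i j.
Proof. by rewrite !mxE. Qed.
Lemma zeroE m n i j : (0 : 'M[int]_(m, n)) i j = 0.
Proof. by rewrite mxE. Qed.

Inductive cone n (w : seq 'I_n) : 'cV[int]_n -> Prop :=
| cone0 : cone w 0
| coneS v i : cone w v -> cone w (v + dvec w i).

Lemma cone_add n (w : seq 'I_n) u v : cone w u -> cone w v -> cone w (u + v).
Proof.
move=> hu; elim => [|v0 i _ IH]; first by rewrite addr0.
by rewrite addrA; apply: coneS.
Qed.

Lemma cone_F n (k : 'I_n) w v : cone w v -> cone (k :: w) (Fm k *m v).
Proof.
elim => [|v0 i _ IH]; first by rewrite mulmx0; apply: cone0.
by rewrite mulmxDr -dvec_cons; apply: coneS.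
Qed.

Lemma cone_M n (w : seq 'I_n) v : cone w v ->
  (forall i, 0 <= (Mmat w *m v) i 0) /\ (v = 0 \/ exists i, 0 < (Mmat w *m v) i 0).
Proof.
elim => [|v0 i _ [IH1 IH2]]; first by split; [move=> i; rewrite mulmx0 zeroE|left].
rewrite mulmxDr M_d; split.
    by move=> r; rewrite addE ebE; have := IH1 r; case: (r == i) => /=; lia.
right; exists i; rewrite addE ebE eqxx /=; have := IH1 i; move: ((Mmat w *m v0) i 0 : int) => t ht. apply: (@lt_le_trans _ _ (0 + 1)) => //. lia.
Qed.

Inductive reach n (S : 'cV[int]_n -> Prop) : 'cV[int]_n -> Prop :=
| reach0 : reach S 0
| reachS x y : reach S x -> S y -> adj x y -> reach S y.

Lemma reach_in n (S : 'cV[int]_n -> Prop) x : S 0 -> reach S x -> S x.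
Proof. by move=> h0; case. Qed.

Definition Inv n (w : seq 'I_n) (j : 'I_n) : Prop :=
  let B := Bset w in let C := avec w j - dvec w j in
  B 0 /\ B C /\ (forall b, B b -> cone w b /\ cone w (C - b)) /\
     (forall b l, B b -> ~ B (b + ebasis l) -> cone w (b + ebasis l - C)) /\
     (forall b l, B b -> ~ B (b - ebasis l) -> cone w (ebasis l - b)) /\
     (forall l, cone w (ebasis l)) /\
     (forall b, B b -> reach (Bset w) b).

Lemma cone_e_nil n (l : 'I_n) : cone [::] (ebasis l).
Proof. by have := coneS l (cone0 [::]); rewrite add0r dvec_nil. Qed.

Lemma Inv_nil n (j : 'I_n) : Inv [::] j.
Proof.
rewrite /Inv avec_nil dvec_nil subrr /Bset /=.
refine (conj _ (conj _ (conj _ (conj _ (conj _ (conj _ _)))))) => //.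
- by move=> b ->; rewrite subrr; split; apply: cone0.
- by move=> b l -> _; rewrite add0r subr0; apply: cone_e_nil.
- by move=> b l -> _; rewrite subr0; apply: cone_e_nil.
- exact: cone_e_nil.
- by move=> b ->; apply: reach0.
Qed.


Ltac absv := repeat match goal with
  | |- context [Fm ?k *m ?b] => let X := fresh "X" in move: (Fm k *m b) => X
  | |- context [ebasis ?l] => let X := fresh "E" in move: (ebasis l) => X
  end.
Lemma addE' n (x y : 'cV[int]_n) i j : (x + y) i j = @GRing.add int (x i j) (y i j).
Proof. by rewrite mxE. Qed.
Lemma oppE' n (x : 'cV[int]_n) i j : (- x) i j = @GRing.opp int (x i j).
Proof. by rewrite !mxE. Qed.
Ltac clearall := repeat match goal with H : _ |- _ => clear H end.
Lemma veqP n (x y : 'cV[int]_n) : (forall i, @eq int (x i 0) (y i 0)) -> x = y.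
Proof. by move=> h; apply/matrixP => i c; rewrite (ord1 c). Qed.
Ltac veq := absv; apply: veqP => ?; rewrite !(addE', oppE'); clearall; lia.

Lemma reach_F n (k : 'I_n) w b : Bset w 0 -> reach (Bset w) b ->
  reach (Bset (k :: w)) (Fm k *m b).
Proof.
move=> B0.
have inB1 : forall b, Bset w b -> Bset (k :: w) (Fm k *m b).
  by move=> b0 h; apply/Bset_cons; exists b0; split => //; left.
have inB2 : forall b, Bset w b -> Bset (k :: w) (Fm k *m b + ebasis k).
  by move=> b0 h; apply/Bset_cons; exists b0; split => //; right.
elim => [|x y Hx IH Sy Axy]; first by rewrite mulmx0; apply: reach0.
have Sx := reach_in B0 Hx.
case: (adj_inv Axy) => l [] Ey; subst y; case: (eqVneq l k) => [e|lk]; try subst l.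
- apply: (reachS IH); first exact: inB1.
  by rewrite mulmxDr F_ek; apply: adj_plus.
- have Z : reach (Bset (k :: w)) (Fm k *m x + ebasis l).
    apply: (reachS IH); last exact: adj_plus.
    have -> : Fm k *m x + ebasis l = Fm k *m (x + ebasis l) + ebasis k.
      by rewrite mulmxDr (F_el lk); veq.
    exact: inB2.
  apply: (reachS Z); first exact: inB1.
  have -> : Fm k *m (x + ebasis l) = Fm k *m x + ebasis l - ebasis k.
    by rewrite mulmxDr (F_el lk); veq.
  exact: adj_minus.
- apply: (reachS IH); first exact: inB1.
  by rewrite mulmxBr F_ek; apply: adj_minus.
- have Z : reach (Bset (k :: w)) (Fm k *m x + ebasis k).
    by apply: (reachS IH); [exact: inB2|exact: adj_plus].
  apply: (reachS Z); first exact: inB1.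
  have -> : Fm k *m (x - ebasis l) = Fm k *m x + ebasis k - ebasis l.
    by rewrite mulmxBr (F_el lk); veq.
  exact: adj_minus.
Qed.

Ltac lin := rewrite ?(mulmxDr, mulmxBr, mulmxN, F_ek);
  try match goal with lk : is_true (?l != ?k) |- _ => rewrite ?(F_el lk) end.

Lemma Inv_cons n (k : 'I_n) w j : Inv w j -> Inv (k :: w) j.
Proof.
rewrite /Inv => [[B0 [BC [I1 [I2 [I3 [I4 I5]]]]]]].
set C := avec w j - dvec w j in BC I1 I2 I3 *.
have CE : avec (k :: w) j - dvec (k :: w) j = Fm k *m C + ebasis k.
  by rewrite avec_cons dvec_cons /C mulmxBr; veq.
rewrite CE; clearbody C.
have inB1 : forall b, Bset w b -> Bset (k :: w) (Fm k *m b).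
  by move=> b0 h; apply/Bset_cons; exists b0; split => //; left.
have inB2 : forall b, Bset w b -> Bset (k :: w) (Fm k *m b + ebasis k).
  by move=> b0 h; apply/Bset_cons; exists b0; split => //; right.
have hF := @cone_F n k w.
have cadd := @cone_add n (k :: w).
have I4' : forall l, cone (k :: w) (ebasis l).
  move=> l; case: (eqVneq l k) => [->|lk]; first by rewrite -F_ek; apply: hF.
  have -> : ebasis l = Fm k *m (ebasis l + ebasis k) by lin; veq.
  by apply: hF; apply: cone_add.
refine (conj _ (conj _ (conj _ (conj _ (conj _ (conj _ _)))))).
- by have := inB1 _ B0; rewrite mulmx0.
- exact: inB2 _ BC.
- move=> x /Bset_cons [b [Hb [->|->]]]; case: (I1 b Hb) => c1 c2; split.
  + exact: hF.
  + have -> : Fm k *m C + ebasis k - Fm k *m b = Fm k *m (C - b) + ebasis k by lin; veq.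
    exact: cadd (hF _ c2) (I4' k).
  + exact: cadd (hF _ c1) (I4' k).
  + have -> : Fm k *m C + ebasis k - (Fm k *m b + ebasis k) = Fm k *m (C - b) by lin; veq.
    exact: hF.
- move=> x l /Bset_cons [b [Hb [->|->]]] Hn; case: (eqVneq l k) => [e|lk]; try subst l.
  + by exfalso; apply: Hn; exact: inB2.
  + case: (classic (Bset w (b + ebasis l))) => h.
      exfalso; apply: Hn.
      have -> : Fm k *m b + ebasis l = Fm k *m (b + ebasis l) + ebasis k by lin; veq.
      exact: inB2.
    have -> : Fm k *m b + ebasis l - (Fm k *m C + ebasis k) = Fm k *m (b + ebasis l - C)
      by lin; veq.
    exact: hF (I2 _ _ Hb h).
  + case: (classic (Bset w (b + ebasis k))) => h.
      exfalso; apply: Hn.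
      have -> : Fm k *m b + ebasis k + ebasis k = Fm k *m (b + ebasis k) + ebasis k by lin; veq.
      exact: inB2.
    have -> : Fm k *m b + ebasis k + ebasis k - (Fm k *m C + ebasis k) =
      Fm k *m (b + ebasis k - C) by lin; veq.
    exact: hF (I2 _ _ Hb h).
  + case: (classic (Bset w (b + ebasis l))) => h.
      case: (classic (Bset w (b + ebasis l + ebasis k))) => h2.
        exfalso; apply: Hn.
        have -> : Fm k *m b + ebasis k + ebasis l = Fm k *m (b + ebasis l + ebasis k) + ebasis k
          by lin; veq.
        exact: inB2.
      have -> : Fm k *m b + ebasis k + ebasis l - (Fm k *m C + ebasis k) =
        Fm k *m (b + ebasis l + ebasis k - C) by lin; veq.
      exact: hF (I2 _ _ h h2).
    have -> : Fm k *m b + ebasis k + ebasis l - (Fm k *m C + ebasis k) =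
      Fm k *m (b + ebasis l - C) + ebasis k by lin; veq.
    exact: cadd (hF _ (I2 _ _ Hb h)) (I4' k).
- move=> x l /Bset_cons [b [Hb [->|->]]] Hn; case: (eqVneq l k) => [e|lk]; try subst l.
  + case: (classic (Bset w (b - ebasis k))) => h.
      exfalso; apply: Hn.
      have -> : Fm k *m b - ebasis k = Fm k *m (b - ebasis k) by lin; veq.
      exact: inB1.
    have -> : ebasis k - Fm k *m b = Fm k *m (ebasis k - b) by lin; veq.
    exact: hF (I3 _ _ Hb h).
  + case: (classic (Bset w (b - ebasis l))) => h.
      case: (classic (Bset w (b - ebasis l - ebasis k))) => h2.
        exfalso; apply: Hn.
        have -> : Fm k *m b - ebasis l = Fm k *m (b - ebasis l - ebasis k) by lin; veq.
        exact: inB1.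
      have -> : ebasis l - Fm k *m b = Fm k *m (ebasis k - (b - ebasis l)) by lin; veq.
      exact: hF (I3 _ _ h h2).
    have -> : ebasis l - Fm k *m b = Fm k *m (ebasis l - b) + ebasis k by lin; veq.
    exact: cadd (hF _ (I3 _ _ Hb h)) (I4' k).
  + exfalso; apply: Hn.
    have -> : Fm k *m b + ebasis k - ebasis k = Fm k *m b by lin; veq.
    exact: inB1.
  + case: (classic (Bset w (b - ebasis l))) => h.
      exfalso; apply: Hn.
      have -> : Fm k *m b + ebasis k - ebasis l = Fm k *m (b - ebasis l) by lin; veq.
      exact: inB1.
    have -> : ebasis l - (Fm k *m b + ebasis k) = Fm k *m (ebasis l - b) by lin; veq.
    exact: hF (I3 _ _ Hb h).
- exact: I4'.
- move=> x /Bset_cons [b [Hb [->|->]]]; first exact: reach_F B0 (I5 _ Hb).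
  exact: reachS (reach_F k B0 (I5 _ Hb)) (inB2 _ Hb) (adj_plus _ _).
Qed.

Lemma Inv_all n (w : seq 'I_n) j : Inv w j.
Proof. by elim: w => [|k w IH]; [exact: Inv_nil|exact: Inv_cons]. Qed.


Lemma comp_char n (X S : 'cV[int]_n -> Prop) : S 0 -> (forall x, S x -> X x) ->
  (forall x, S x -> reach S x) -> (forall x z, S x -> adj x z -> X z -> S z) ->
  forall x, S x <-> Comp0 X x.
Proof.
move=> S0 SX Sr Scl x; split.
  move=> /Sr; elim => [|a y Ha [p [X0 Xp Pp Lp]] Sy Ay].
    by exists [::]; split => //; apply: SX.
  exists (rcons p y); split => //.
  - by move=> z; rewrite mem_rcons in_cons => /orP [/eqP ->|/Xp]; [apply: SX|].
  - by rewrite rcons_path Pp Lp.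
  - by rewrite last_rcons.
move=> [p [X0 Xp Pp Lp]]; rewrite -Lp; clear Lp.
elim: p 0 S0 Pp Xp => [|z p IH] a Sa //= /andP [Az Pp] Xp.
apply: IH => //; first (apply: (Scl a) => //; apply: Xp; exact: mem_head).
by move=> y yp; apply: Xp; rewrite in_cons yp orbT.
Qed.

Lemma subE' n (x y : 'cV[int]_n) i j : (x - y) i j = @GRing.add int (x i j) (@GRing.opp int (y i j)).
Proof. by rewrite !mxE. Qed.
Lemma zeroE' n i j : (0 : 'cV[int]_n) i j = (0 : int).
Proof. by rewrite mxE. Qed.

Definition le_vec n (x y : 'cV[int]_n) := forall i, x i 0 <= y i 0.
Definition lt_some n (x y : 'cV[int]_n) := exists i, x i 0 < y i 0.

Lemma coneM' n (w : seq 'I_n) v : cone w v ->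
  le_vec 0 (Mmat w *m v) /\ (v = 0 \/ lt_some 0 (Mmat w *m v)).
Proof.
move=> /cone_M [h1 h2]; split; first by move=> i; rewrite zeroE'; exact: h1.
case: h2 => [->|[i hi]]; [by left|right; exists i; rewrite zeroE'; exact: hi].
Qed.

Lemma coneMp n (w : seq 'I_n) v : cone w v -> v <> 0 ->
  le_vec 0 (Mmat w *m v) /\ lt_some 0 (Mmat w *m v).
Proof. by move=> /coneM' [h1 [->//|h2]] _. Qed.

Lemma le_sub n (x y : 'cV[int]_n) : le_vec 0 (x - y) -> le_vec y x.
Proof. by move=> h i; have := h i; rewrite subE' zeroE'; lia. Qed.
Lemma lt_sub n (x y : 'cV[int]_n) : lt_some 0 (x - y) -> lt_some y x.
Proof. by move=> [i h]; exists i; move: h; rewrite subE' zeroE'; lia. Qed.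
Lemma le_opp n (x : 'cV[int]_n) : le_vec 0 (- x) -> le_vec x 0.
Proof. by move=> h i; have := h i; rewrite oppE' !zeroE'; lia. Qed.
Lemma lt_opp n (x : 'cV[int]_n) : lt_some 0 (- x) -> lt_some x 0.
Proof. by move=> [i h]; exists i; move: h; rewrite oppE' !zeroE'; lia. Qed.

Lemma le_or_eq n (x y : 'cV[int]_n) : le_vec x y -> x = y \/ lt_some x y.
Proof.
move=> h; case: (classic (lt_some x y)) => [|hn]; [by right|left].
apply: veqP => i; have := h i; case: (ltP (x i 0) (y i 0)) => [hl|hl] h'.
  by exfalso; apply: hn; exists i.
by apply/eqP; rewrite eq_le h'.
Qed.

Lemma le_addej n (x y : 'cV[int]_n) j : le_vec x y -> le_vec (x + ebasis j) (y + ebasis j).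
Proof. by move=> h i; rewrite !addE' ebE; have := h i; case: (i == j); lia. Qed.
Lemma lt_addej n (x y : 'cV[int]_n) j : lt_some x y -> lt_some (x + ebasis j) (y + ebasis j).
Proof. by move=> [i h]; exists i; rewrite !addE' ebE; move: h; case: (i == j); lia. Qed.
Lemma le_ej n (x y : 'cV[int]_n) j : le_vec x y -> le_vec x (y + ebasis j).
Proof. by move=> h i; rewrite !addE' ebE; have := h i; case: (i == j); lia. Qed.
Lemma lt_ej n (x y : 'cV[int]_n) j : le_vec x y -> lt_some x (y + ebasis j).
Proof. by move=> h; exists j; rewrite !addE' ebE eqxx; have := h j; lia. Qed.
Lemma le_trans' n (x y z : 'cV[int]_n) : le_vec x y -> le_vec y z -> le_vec x z.
Proof. by move=> h1 h2 i; have := h1 i; have := h2 i; lia. Qed.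

Theorem lemma3p7 (n : nat) (w : seq 'I_n) (j : 'I_n) (s : 'S_n) :
  (s j : nat) = n.-1 ->
  (forall x, Bset w x <->
     Comp0 (setminus (Loset (avec w j) (Mmat w) s) (Loset 0 (Mmat w) s)) x) /\
  (forall x, Bset (rcons w j) x <->
     Comp0 (setminus (Lset (avec w j) (Mmat w) s) (Loset 0 (Mmat w) s)) x).
Proof.
move=> hj.
have [B0 [BC [I1 [I2 [I3 [I4 I5]]]]]] := Inv_all w j.
have [_ [_ [_ [_ [_ [_ I5r]]]]]] := Inv_all (rcons w j) j.
set C := avec w j - dvec w j in BC I1 I2 I3.
have Ma : Mmat w *m avec w j = Mmat w *m C + ebasis j.
  by rewrite /C mulmxBr M_d subrK.
clearbody C.
rewrite /Loset /Lset /setminus Ma mulmx0.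
have Md : Mmat w *m dvec w j = ebasis j by apply: M_d.
have Minj : forall x y : 'cV[int]_n, Mmat w *m x = Mmat w *m y -> x = y.
  by move=> x y; apply: M_inj.
have Bge0 : forall b, Bset w b -> le_vec 0 (Mmat w *m b).
  by move=> b Hb; case: (I1 b Hb) => c1 _; case: (coneM' c1).
have BleC : forall b, Bset w b -> le_vec (Mmat w *m b) (Mmat w *m C).
  move=> b Hb; case: (I1 b Hb) => _ c2; case: (coneM' c2) => h _.
  by apply: le_sub; rewrite -mulmxBr.
have above : forall z, ~ Bset w z -> cone w (z - C) ->
    le_vec (Mmat w *m C) (Mmat w *m z) /\ lt_some (Mmat w *m C) (Mmat w *m z).
  move=> z nz cz; have zC : z - C <> 0.
    by move=> e; apply: nz; move/eqP: e; rewrite subr_eq0 => /eqP ->.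
  case: (coneMp cz zC); rewrite mulmxBr => h1 h2.
  by split; [apply: le_sub|apply: lt_sub].
have below : forall z, ~ Bset w z -> cone w (- z) ->
    le_vec (Mmat w *m z) 0 /\ lt_some (Mmat w *m z) 0.
  move=> z nz cz; have zC : - z <> 0.
    by move=> e; apply: nz; move/eqP: e; rewrite oppr_eq0 => /eqP ->.
  case: (coneMp cz zC); rewrite mulmxN => h1 h2.
  by split; [apply: le_opp|apply: lt_opp].
split.
- apply: comp_char => //.
  + move=> x Hx; split; first by apply: L1; [apply: le_ej|apply: lt_ej]; apply: BleC.
    by apply: L0; apply: Bge0.
  + move=> x z Sx Axz [Xz1 Xz2]; apply: NNPP => nz.
    case: (adj_inv Axz) => l [] Ez.
    * have cz : cone w (z - C) by rewrite Ez; apply: I2 => //; rewrite -Ez.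
      case: (above z nz cz) => h1 h2.
      by apply: (L2 hj h1 h2).
    * have cz : cone w (- z).
        by rewrite Ez opprB; apply: I3 => //; rewrite -Ez.
      case: (below z nz cz) => h1 h2.
      by apply: Xz2; apply: L1.
- have inS : forall b, Bset w b -> Bset (rcons w j) b.
    by move=> b Hb; apply/Bset_rcons; exists b; split => //; left.
  have inSd : forall b, Bset w b -> Bset (rcons w j) (b + dvec w j).
    by move=> b Hb; apply/Bset_rcons; exists b; split => //; right.
  apply: comp_char => //.
  + exact: inS.
  + move=> x /Bset_rcons [b [Hb [->|->]]]; split.
    * by right; apply: L1; [apply: le_ej|apply: lt_ej]; apply: BleC.
    * by apply: L0; apply: Bge0.
    * rewrite mulmxDr Md; case: (le_or_eq (BleC b Hb)) => [e|lt].
        by left; rewrite e.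
      by right; apply: L1; [apply: le_addej; apply: BleC|apply: lt_addej].
    * by apply: L0; rewrite mulmxDr Md; apply: le_ej; apply: Bge0.
  + move=> x z /Bset_rcons [b [Hb Hx]] Axz [Xz1 Xz2]; apply: NNPP => nz.
    have nzB : ~ Bset w z by move=> h; apply: nz; apply: inS.
    case: (adj_inv Axz) => l [] Ez; case: Hx => Ex; subst x.
    * have cz : cone w (z - C) by rewrite Ez; apply: I2 => //; rewrite -Ez.
      case: (above z nzB cz) => h1 h2.
      case: Xz1 => [e|lt]; last exact: (L2 hj h1 h2 lt).
      apply: nz; have -> : z = C + dvec w j.
        by apply: Minj; rewrite mulmxDr Md; apply: pact_inj e.
      exact: inSd.
    * case: (classic (Bset w (b + ebasis l))) => hq.
        by apply: nz; rewrite Ez addrAC; apply: inSd.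
      have cq := I2 b l Hb hq.
      case: (above _ hq cq) => h1 h2.
      move: Xz1; rewrite Ez addrAC mulmxDr Md => -[e|lt].
        have e' := pact_inj e; move/addIr: e' => e'.
        by case: h2 => i; rewrite e'; lia.
      exact: (L0 (le_addej j h1) lt).
    * have cz : cone w (- z) by rewrite Ez opprB; apply: I3 => //; rewrite -Ez.
      case: (below z nzB cz) => h1 h2.
      by apply: Xz2; apply: L1.
    * case: (classic (Bset w (b - ebasis l))) => hq.
        by apply: nz; rewrite Ez addrAC; apply: inSd.
      have cq : cone w (- (b - ebasis l)) by rewrite opprB; apply: I3.
      case: (below _ hq cq) => h1 [i1 h2].
      move: Xz2; rewrite Ez addrAC mulmxDr Md => Xz2.
      case: (eqVneq (Mmat w *m (b - ebasis l) + ebasis j) 0) => [e|ne].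
        apply: nz; rewrite Ez addrAC; have -> : b - ebasis l + dvec w j = 0.
          by apply: Minj; rewrite mulmxDr Md e mulmx0.
        exact: inS.
      apply: Xz2; apply: (L4 hj) => //.
        by move=> i; have := h1 i; rewrite zeroE'.
      by exists i1; move: h2; rewrite zeroE'.
Qed.
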